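(* If $R$ is a right almost perfect ring, then every non-faithful left $R$-module is semiartinian.
   Context: Rings are associative with identity $1\neq 0$. A ring $R$ is called right almost perfect if $R/I$ is a right perfect ring for every two-sided ideal $I$ of $R$ with $I\neq 0$ and $I\neq R$. A module $M$ is non-faithful if its annihilator in $R$ is non-zero. A module $M$ is semiartinian if every non-zero homomorphic image of $M$ contains a simple submodule (equivalently, every homomorphic image of $M$ is an essential extension of its socle). *)

(* Defs.v *)
From HB Require Import structures.
From mathcomp Require Import all_boot all_order all_algebra.
Set Implicit Arguments. Unset Strict Implicit. Unset Printing Implicit Defensive.
Import GRing.Theory.
Local Open Scope ring_scope.

Definition left_ideal (R : nzRingType) (L : R -> Prop) : Prop :=
  [/\ L 0, (forall x y, L x -> L y -> L (x + y)) & (forall r x, L x -> L (r * x))].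

Definition two_sided_ideal (R : nzRingType) (I : R -> Prop) : Prop :=
  [/\ left_ideal I & (forall r x, I x -> I (x * r))].

Definition maximal_left_ideal (R : nzRingType) (L : R -> Prop) : Prop :=
  [/\ left_ideal L, ~ L 1 &
      forall L' : R -> Prop, left_ideal L' -> (forall x, L x -> L' x) ->
        L' 1 \/ (forall x, L' x -> L x)].

Definition jacobson (R : nzRingType) (x : R) : Prop :=
  forall L : R -> Prop, maximal_left_ideal L -> L x.

Fixpoint rev_prod (R : nzRingType) (a : nat -> R) (n : nat) : R :=
  match n with
  | 0 => a 0%N
  | m.+1 => a m.+1 * rev_prod a m
  end.

(* right T-nilpotent: for every sequence a_0, a_1, ... in A, some product
   a_n ... a_1 a_0 vanishes (the condition making M A <> M for every nonzero
   right module M) *)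
Definition right_T_nilpotent (R : nzRingType) (A : R -> Prop) : Prop :=
  forall a : nat -> R, (forall n, A (a n)) -> exists n, rev_prod a n = 0.

(* semisimple ring: the left regular module is semisimple, i.e. every left
   ideal is a direct summand of R *)
Definition semisimple_ring (R : nzRingType) : Prop :=
  forall L : R -> Prop, left_ideal L ->
    exists L' : R -> Prop, [/\ left_ideal L',
      (forall x, L x -> L' x -> x = 0) &
      (forall x, exists y z, [/\ L y, L' z & x = y + z])].

Definition is_quotient_ring (R S : nzRingType) (f : {rmorphism R -> S})
    (I : R -> Prop) : Prop :=
  (forall y, exists x, f x = y) /\ (forall x, f x = 0 <-> I x).

Definition right_perfect (S : nzRingType) : Prop :=
  right_T_nilpotent (@jacobson S) /\
  forall (T : nzRingType) (g : {rmorphism S -> T}),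
    is_quotient_ring g (@jacobson S) -> semisimple_ring T.

Definition right_almost_perfect (R : nzRingType) : Prop :=
  forall I : R -> Prop, two_sided_ideal I ->
    (exists x, I x /\ x <> 0) -> (exists x, ~ I x) ->
    forall (S : nzRingType) (f : {rmorphism R -> S}),
      is_quotient_ring f I -> right_perfect S.

Definition submodule (R : nzRingType) (M : lmodType R) (P : M -> Prop) : Prop :=
  [/\ P 0, (forall x y, P x -> P y -> P (x + y)) & (forall (r : R) x, P x -> P (r *: x))].

Definition simple_submodule (R : nzRingType) (M : lmodType R) (P : M -> Prop) : Prop :=
  [/\ submodule P, (exists x, P x /\ x <> 0) &
      forall Q : M -> Prop, submodule Q -> (forall x, Q x -> P x) ->
        (forall x, Q x -> x = 0) \/ (forall x, P x -> Q x)].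

Definition non_faithful (R : nzRingType) (M : lmodType R) : Prop :=
  exists r : R, r <> 0 /\ forall m : M, r *: m = 0.

Definition semiartinian (R : nzRingType) (M : lmodType R) : Prop :=
  forall (N : lmodType R) (f : {linear M -> N}),
    (forall y, exists x, f x = y) -> (exists y : N, y <> 0) ->
    exists P : N -> Prop, simple_submodule P.

(* Main.v *)
Require Import Defs.
From HB Require Import structures.
From mathcomp Require Import all_boot all_order all_algebra.
From Stdlib Require Import Classical ClassicalEpsilon FunctionalExtensionality PropExtensionality.
Set Implicit Arguments. Unset Strict Implicit. Unset Printing Implicit Defensive.
Import GRing.Theory.
Local Open Scope ring_scope.

Lemma a1 (R : zmodType) (x y z : R) : y - z = (x - z) - (x - y).
Proof. by rewrite opprB [RHS]addrC addrA subrK. Qed.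
Lemma a2 (R : zmodType) (x y z : R) : x - z = (x - y) + (y - z).
Proof. by rewrite addrA subrK. Qed.
Lemma a3 (R : zmodType) (x y c d : R) (e : c = d) : x - y = (x - c) - (y - d).
Proof. by rewrite e opprB addrA subrK. Qed.
Lemma a4 (R : zmodType) (x y c d : R) : c + d - (x + y) = (c - x) + (d - y).
Proof. by rewrite opprD addrACA. Qed.
Lemma a5 (R : nzRingType) (x y c d : R) : c * d - x * y = (c - x) * d + x * (d - y).
Proof. by rewrite mulrBl mulrBr addrA subrK. Qed.

Section Ideal.
Variables (R : nzRingType) (I : R -> Prop) (hI : two_sided_ideal I).
Lemma idall : [/\ I 0, (forall x y, I x -> I y -> I (x + y)), (forall r x, I x -> I (r * x)) &
  (forall r x, I x -> I (x * r))].
Proof. by move: hI; rewrite /two_sided_ideal /left_ideal => -[[h0 hD hM] hR]. Qed.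
Lemma id0 : I 0. Proof. by case: idall => h. Qed.
Lemma idD x y : I x -> I y -> I (x + y). Proof. by case: idall => _ h _ _; apply: h. Qed.
Lemma idMl r x : I x -> I (r * x). Proof. by case: idall => _ _ h _; apply: h. Qed.
Lemma idMr r x : I x -> I (x * r). Proof. by case: idall => _ _ _ h; apply: h. Qed.
Lemma idN x : I x -> I (- x). Proof. by move=> h; rewrite -mulN1r; apply: idMl. Qed.
Lemma idB x y : I x -> I y -> I (x - y). Proof. by move=> h1 h2; apply: idD => //; apply: idN. Qed.
End Ideal.

Section Quot.
Variables (R : nzRingType) (I : R -> Prop) (hI : two_sided_ideal I) (h1 : ~ I 1).

Definition canon (x : R) : R := epsilon (inhabits 0) (fun y => I (x - y)).
Lemma canon_spec x : I (x - canon x).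
Proof. apply: (epsilon_spec (inhabits 0) (fun y => I (x - y))); exists x; rewrite subrr; exact: id0. Qed.
Lemma canon_eq x y : I (x - y) -> canon x = canon y.
Proof.
move=> h; rewrite /canon; congr epsilon; apply: functional_extensionality => z.
apply: propositional_extensionality; split => hz.
  rewrite (a1 x y z).
  exact: idB.
rewrite (a2 x y z).
exact: idD.
Qed.
Lemma canonK x : canon (canon x) = canon x.
Proof. apply: canon_eq; rewrite -opprB; apply: idN => //; exact: canon_spec. Qed.

Definition Q (_ : two_sided_ideal I) (_ : ~ I 1) : Type := {x : R | canon x == x}.
Local Notation QQ := (Q hI h1).
HB.instance Definition _ := Choice.on QQ.
Definition pi (x : R) : QQ := exist _ (canon x) (introT eqP (canonK x)).
Lemma valK (a : QQ) : pi (val a) = a.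
Proof. by apply: val_inj => /=; apply/eqP; case: a. Qed.
Lemma pi_eq x y : I (x - y) -> pi x = pi y.
Proof. by move=> h; apply: val_inj => /=; apply: canon_eq. Qed.
Lemma pi_eqE x y : pi x = pi y -> I (x - y).
Proof.
move=> /(congr1 val) /= e.
rewrite (a3 x y e).
by apply: idB => //; apply: canon_spec.
Qed.
Lemma piIc x : I (canon x - x).
Proof. by rewrite -opprB; apply: idN => //; apply: canon_spec. Qed.

Definition qzero := pi 0.
Definition qopp (a : QQ) := pi (- val a).
Definition qadd (a b : QQ) := pi (val a + val b).
Definition qone := pi 1.
Definition qmul (a b : QQ) := pi (val a * val b).

Lemma qaddE x y : qadd (pi x) (pi y) = pi (x + y).
Proof.
apply: pi_eq => /=.
rewrite a4.
by apply: idD => //; apply: piIc.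
Qed.
Lemma qoppE x : qopp (pi x) = pi (- x).
Proof. apply: pi_eq => /=; rewrite -opprD; apply: idN => //; exact: piIc. Qed.
Lemma qmulE x y : qmul (pi x) (pi y) = pi (x * y).
Proof.
apply: pi_eq => /=.
rewrite a5.
by apply: idD => //; [apply: idMr | apply: idMl] => //; apply: piIc.
Qed.

Lemma qaddA : associative qadd.
Proof. by move=> a b c; rewrite -[a]valK -[b]valK -[c]valK !qaddE addrA. Qed.
Lemma qaddC : commutative qadd.
Proof. by move=> a b; rewrite -[a]valK -[b]valK !qaddE addrC. Qed.
Lemma qadd0 : left_id qzero qadd.
Proof. by move=> a; rewrite -[a]valK /qzero !qaddE add0r. Qed.
Lemma qaddN : left_inverse qzero qopp qadd.
Proof. by move=> a; rewrite -[a]valK qoppE qaddE addNr. Qed.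
Lemma qmulA : associative qmul.
Proof. by move=> a b c; rewrite -[a]valK -[b]valK -[c]valK !qmulE mulrA. Qed.
Lemma qmul1 : left_id qone qmul.
Proof. by move=> a; rewrite -[a]valK /qone !qmulE mul1r. Qed.
Lemma qmulr1 : right_id qone qmul.
Proof. by move=> a; rewrite -[a]valK /qone !qmulE mulr1. Qed.
Lemma qmulDl : left_distributive qmul qadd.
Proof. by move=> a b c; rewrite -[a]valK -[b]valK -[c]valK !(qmulE, qaddE) mulrDl. Qed.
Lemma qmulDr : right_distributive qmul qadd.
Proof. by move=> a b c; rewrite -[a]valK -[b]valK -[c]valK !(qmulE, qaddE) mulrDr. Qed.
Lemma qone0 : qone != qzero.
Proof. by apply/eqP => /pi_eqE; rewrite subr0. Qed.

HB.instance Definition _ := GRing.isNzRing.Build QQ qaddA qaddC qadd0 qaddN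
  qmulA qmul1 qmulr1 qmulDl qmulDr qone0.

Lemma pi_zmod : zmod_morphism (pi : R -> QQ).
Proof. by move=> x y; rewrite -qaddE -qoppE. Qed.
HB.instance Definition _ := GRing.isZmodMorphism.Build R QQ pi pi_zmod.
Lemma pi_mon : monoid_morphism (pi : R -> QQ).
Proof. by split => // x y; rewrite -qmulE. Qed.
HB.instance Definition _ := GRing.isMonoidMorphism.Build R QQ pi pi_mon.

Lemma quot_ok : is_quotient_ring (pi : {rmorphism R -> QQ}) I.
Proof.
split; first by move=> y; exists (val y); exact: valK.
move=> x; split.
  by move=> h; have := pi_eqE (x:=x) (y:=0); rewrite subr0; apply; apply: h.
by move=> h; apply: pi_eq; rewrite subr0.
Qed.
End Quot.

Lemma quot_exists (R : nzRingType) (I : R -> Prop) : two_sided_ideal I -> ~ I 1 ->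
  exists (S : nzRingType) (f : {rmorphism R -> S}), is_quotient_ring f I.
Proof. move=> hI h1; exists (Q hI h1); exists (@pi R I hI h1 : {rmorphism _ -> _}); exact: quot_ok. Qed.


Section LI.
Variables (R : nzRingType) (L : R -> Prop) (hL : left_ideal L).
Lemma li0 : L 0. Proof. by case: hL. Qed.
Lemma liD x y : L x -> L y -> L (x + y). Proof. by case: hL => _ h _; apply: h. Qed.
Lemma liM r x : L x -> L (r * x). Proof. by case: hL => _ _ h; apply: h. Qed.
Lemma liN x : L x -> L (- x). Proof. by move=> h; rewrite -mulN1r; apply: liM. Qed.
Lemma liB x y : L x -> L y -> L (x - y). Proof. by move=> h1 h2; apply: liD => //; apply: liN. Qed.
End LI.

Section SM.
Variables (R : nzRingType) (M : lmodType R) (P : M -> Prop) (hP : submodule P).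
Lemma sm0 : P 0. Proof. by case: hP. Qed.
Lemma smD x y : P x -> P y -> P (x + y). Proof. by case: hP => _ h _; apply: h. Qed.
Lemma smZ (r : R) x : P x -> P (r *: x). Proof. by case: hP => _ _ h; apply: h. Qed.
End SM.

Section Jac.
Variable S : nzRingType.

Lemma jac_left : left_ideal (@jacobson S).
Proof.
split.
- by move=> L [hL _ _]; apply: li0.
- by move=> x y hx hy L hm; case: (hm) => hL _ _; apply: liD => //; [apply: hx | apply: hy].
- by move=> r x hx L hm; case: (hm) => hL _ _; apply: liM => //; apply: hx.
Qed.

Lemma colon_max (L : S -> Prop) (s : S) : maximal_left_ideal L -> ~ L s ->
  maximal_left_ideal (fun z => L (z * s)).
Proof.
move=> [hL h1 hmax] hs; split.
- split.
  + by rewrite mul0r; apply: li0.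
  + by move=> x y hx hy; rewrite mulrDl; apply: liD.
  + by move=> r x hx; rewrite -mulrA; apply: liM.
- by rewrite mul1r.
move=> L'' hL'' hsub.
case: (classic (forall x, L'' x -> L (x * s))) => [h|]; first by right.
move=> hn; have [z hz'] := not_all_ex_not _ _ hn; have [hz hzs] := imply_to_and _ _ hz'; left.
pose D u := exists w l, [/\ L'' w, L l & u = w * s + l].
have hD : left_ideal D.
  split.
  + by exists 0, 0; rewrite mul0r addr0; split => //; [apply: li0 | apply: li0].
  + move=> x y [w1 [l1 [hw1 hl1 ->]]] [w2 [l2 [hw2 hl2 ->]]].
    exists (w1 + w2), (l1 + l2); split; [exact: liD | exact: liD |].
    by rewrite mulrDl addrACA.
  + move=> r x [w [l [hw hl ->]]]; exists (r * w), (r * l); split; [exact: liM | exact: liM |].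
    by rewrite mulrDr mulrA.
have LD : forall x, L x -> D x.
  by move=> x hx; exists 0, x; rewrite mul0r add0r; split => //; apply: li0.
case: (hmax D hD LD) => [[w [l [hw hl e]]] | hDL]; last first.
  by exfalso; apply: hzs; apply: hDL; exists z, 0; rewrite addr0; split => //; apply: li0.
have hsw : L'' (s * w) by apply: liM.
have h2 : L'' (1 - s * w).
  apply: hsub => /=.
  have -> : (1 - s * w) * s = s * l.
    have ews : w * s = 1 - l by rewrite e addrK.
    by rewrite mulrBl mul1r -mulrA ews mulrBr mulr1 opprB addrC subrK.
  exact: liM.
by rewrite -(subrK (s * w) 1); apply: liD.
Qed.

Lemma jac_right r x : jacobson x -> @jacobson S (x * r).
Proof.
move=> hx L hm; case: (hm) => hL _ _.
case: (classic (L r)) => hr; first exact: liM.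
exact: (hx _ (colon_max hm hr)).
Qed.

Lemma jac_two : two_sided_ideal (@jacobson S).
Proof. by split; [exact: jac_left | move=> r x; apply: jac_right]. Qed.

Lemma rev_prod1 n : rev_prod (fun _ : nat => (1 : S)) n = 1.
Proof. by elim: n => //= n ->; rewrite mulr1. Qed.

Lemma jac_proper : right_T_nilpotent (@jacobson S) -> ~ jacobson (1 : S).
Proof.
move=> hT h1; have [n hn] := hT (fun _ => 1) (fun _ => h1).
by move: hn; rewrite rev_prod1; apply/eqP; apply: oner_neq0.
Qed.
End Jac.

Lemma rev_prod_morph (R S : nzRingType) (f : {rmorphism R -> S}) (a : nat -> R) n :
  f (rev_prod a n) = rev_prod (fun k => f (a k)) n.
Proof. by elim: n => //= n <-; rewrite rmorphM. Qed.

Definition compl_prop (R : nzRingType) (K0 : R -> Prop) :=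
  forall L : R -> Prop, left_ideal L -> (forall x, K0 x -> L x) ->
    exists L' : R -> Prop, [/\ left_ideal L', (forall x, L x -> L' x -> K0 x) &
      (forall x, exists y z, [/\ L y, L' z & x = y + z])].

Lemma compl_transfer (R T : nzRingType) (h : {rmorphism R -> T}) :
  (forall t, exists x, h x = t) -> semisimple_ring T -> compl_prop (fun x => h x = 0).
Proof.
move=> hs hss L hL hK.
pose Li t := exists x, L x /\ h x = t.
have hLi : left_ideal Li.
  split.
  + by exists 0; rewrite rmorph0; split => //; apply: li0.
  + by move=> _ _ [x [hx <-]] [y [hy <-]]; exists (x + y); rewrite rmorphD; split => //; apply: liD.
  + move=> r _ [x [hx <-]]; have [r' <-] := hs r.
    by exists (r' * x); rewrite rmorphM; split => //; apply: liM.
have [L'' [hL'' hdis hsum]] := hss Li hLi.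
exists (fun x => L'' (h x)); split.
- split.
  + by rewrite rmorph0; apply: li0.
  + by move=> x y hx hy; rewrite rmorphD; apply: liD.
  + by move=> r x hx; rewrite rmorphM; apply: liM.
- by move=> x hx hx'; apply: hdis => //; exists x.
move=> x; have [_ [z'' [[y [hy <-]] hz'' e]]] := hsum (h x).
have [z ez] := hs z''.
exists (x - z), z; split; last by rewrite subrK.
- have hk : L (x - z - y) by apply: hK; rewrite !rmorphB e ez addrK subrr.
  by rewrite -(subrK y (x - z)); apply: liD.
- by rewrite ez.
Qed.

Section MaxExists.
Variables (R : nzRingType) (K0 : R -> Prop) (hc : compl_prop K0).

Lemma max_exists (A : R -> Prop) : left_ideal A -> (forall x, K0 x -> A x) -> ~ A 1 ->
  exists K : R -> Prop, [/\ left_ideal K, (forall x, A x -> K x), ~ K 1 &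
    forall K', left_ideal K' -> (forall x, K x -> K' x) -> K' 1 \/ (forall x, K' x -> K x)].
Proof.
move=> hA hKA hA1.
apply: NNPP => hno.
pose Fam (K : R -> Prop) := [/\ left_ideal K, (forall x, A x -> K x) & ~ K 1].
have step : forall K, exists K', Fam K -> [/\ Fam K', (forall x, K x -> K' x) &
    exists x, K' x /\ ~ K x].
  move=> K; case: (classic (Fam K)) => [[h1 h2 h3]|]; last by move=> h; exists K.
  apply: NNPP => hn; apply: hno; exists K; split => // K' hK' hsub.
  case: (classic (K' 1)) => [|n1]; first by left.
  right => x hx; apply: NNPP => nx; apply: hn; exists K' => _; split => //.
    by split => // y hy; apply: hsub; apply: h2.
  by exists x.
pose nxt K := proj1_sig (constructive_indefinite_description _ (step K)).
have nxtP K : Fam K -> [/\ Fam (nxt K), (forall x, K x -> nxt K x) & exists x, nxt K x /\ ~ K x].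
  exact: (proj2_sig (constructive_indefinite_description _ (step K))).
pose c n := iter n nxt A.
have cF n : Fam (c n).
  elim: n => [|n IH]; first by split.
  by case: (nxtP _ IH).
have cS n x : c n x -> c n.+1 x by case: (nxtP _ (cF n)) => _ h _; apply: h.
have cmono m n x : (m <= n)%N -> c m x -> c n x.
  move=> /subnK <-; elim: (n - m)%N => // k IH hx.
  by rewrite addSn; apply: cS; apply: IH.
pose U x := exists n, c n x.
have cL n : left_ideal (c n) by case: (cF n).
have hU : left_ideal U.
  split.
  + by exists 0%N; apply: li0.
  + move=> x y [m hm] [n hn]; exists (maxn m n); apply: liD => //.
    * by apply: (cmono m) => //; apply: leq_maxl.
    * by apply: (cmono n) => //; apply: leq_maxr.
  + by move=> r x [n hn]; exists n; apply: liM.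
have hKU : forall x, K0 x -> U x by move=> x hx; exists 0%N; apply: hKA.
have [U' [hU' hdis hsum]] := hc hU hKU.
have [e [e' [[n he] he' e1]]] := hsum 1.
have hUn : forall x, U x -> c n x.
  move=> x hx.
  have hxe : c n (x * e) by apply: liM.
  have hxe' : x * e' = x - x * e.
    by apply/eqP; rewrite eq_sym subr_eq addrC -mulrDr -e1 mulr1.
  have : K0 (x * e').
    apply: hdis; last by apply: liM.
    rewrite hxe'; apply: (liB hU hx); apply: (liM hU); by exists n.
  move=> /hKA hA'; have hce' : c n (x * e') by apply: (cmono 0%N).
  have ex : x = x * e + x * e' by rewrite -mulrDr -e1 mulr1.
  by rewrite ex; apply: liD.
case: (nxtP _ (cF n)) => _ _ [z [hz nz]].
by apply: nz; apply: hUn; exists n.+1.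
Qed.
End MaxExists.

Lemma stepA (R : nzRingType) (N : lmodType R) (K0 : R -> Prop) (y0 : N) :
  y0 <> 0 ->
  (forall a : nat -> R, (forall n, K0 (a n)) -> exists n, forall m : N, rev_prod a n *: m = 0) ->
  exists y : N, y <> 0 /\ forall r, K0 r -> r *: y = 0.
Proof.
move=> hy0 hT; apply: NNPP => hno.
have H : forall y : N, exists r : R, y <> 0 -> K0 r /\ r *: y <> 0.
  move=> y; case: (classic (y = 0)) => [->|ny]; first by exists 0.
  apply: NNPP => hn; apply: hno; exists y; split => // r hr.
  apply: NNPP => hry; apply: hn; exists r => _; split => //.
pose c y := proj1_sig (constructive_indefinite_description _ (H y)).
have cP y : y <> 0 -> K0 (c y) /\ c y *: y <> 0.
  exact: (proj2_sig (constructive_indefinite_description _ (H y))).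
pose ys n := iter n (fun y => c y *: y) y0.
have ysnz n : ys n <> 0.
  elim: n => [|n IH] //=; exact: (cP _ IH).2.
pose a n := c (ys n).
have ha n : K0 (a n) by exact: (cP _ (ysnz n)).1.
have rp n : rev_prod a n *: y0 = ys n.+1.
  elim: n => [|n IH] //=.
  by rewrite -scalerA IH.
have [n hn] := hT a ha.
by apply: (ysnz n.+1); rewrite -rp hn.
Qed.

Lemma simple_exists (R : nzRingType) (N : lmodType R) (K0 : R -> Prop) (y : N)
  (hc : compl_prop K0) (K : R -> Prop) :
  y <> 0 -> (forall r, K0 r -> r *: y = 0) -> left_ideal K ->
  (forall x, x *: y = 0 -> K x) -> ~ K 1 ->
  (forall K', left_ideal K' -> (forall x, K x -> K' x) -> K' 1 \/ (forall x, K' x -> K x)) ->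
  exists P : N -> Prop, simple_submodule P.
Proof.
move=> ny hK0 hK hAK nK1 hmax.
have hK0K : forall x, K0 x -> K x by move=> x hx; apply: hAK; apply: hK0.
have [K' [hK' hdis hsum]] := hc K hK hK0K.
exists (fun m => exists a, K' a /\ m = a *: y).
have hP : submodule (fun m => exists a, K' a /\ m = a *: y).
  split.
  + by exists 0; rewrite scale0r; split => //; apply: li0.
  + move=> _ _ [a [ha ->]] [b [hb ->]]; exists (a + b); rewrite scalerDl; split => //.
    exact: liD.
  + move=> r _ [a [ha ->]]; exists (r * a); rewrite scalerA; split => //; exact: liM.
split => //.
  have [k [k' [hk hk' e]]] := hsum 1.
  exists (k' *: y); split; first by exists k'.
  move=> h0; apply: nK1; rewrite e; apply: liD => //; exact: hAK.
move=> Q hQ hQP.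
pose B v := K' v /\ Q (v *: y).
pose L x := exists u v, [/\ K u, B v & x = u + v].
have hL : left_ideal L.
  split.
  + exists 0, 0; rewrite addr0; split => //; first exact: li0.
    by split; [apply: li0 | rewrite scale0r; apply: sm0].
  + move=> _ _ [u1 [v1 [hu1 [hv1 hq1] ->]]] [u2 [v2 [hu2 [hv2 hq2] ->]]].
    exists (u1 + u2), (v1 + v2); split; [exact: liD | | by rewrite addrACA].
    by split; [apply: liD | rewrite scalerDl; apply: smD].
  + move=> r _ [u [v [hu [hv hq] ->]]]; exists (r * u), (r * v); split; [exact: liM | | by rewrite mulrDr].
    by split; [apply: liM | rewrite -scalerA; apply: smZ].
have hKL : forall x, K x -> L x.
  move=> x hx; exists x, 0; rewrite addr0; split => //.
  by split; [apply: li0 | rewrite scale0r; apply: sm0].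
case: (hmax L hL hKL) => [[u [v [hu [hv hq] e]]] | hLK].
  right => _ [a [ha ->]].
  have ea : a = a * u + a * v by rewrite -mulrDr -e mulr1.
  have hau : K0 (a * u).
    apply: hdis; first exact: liM.
    have -> : a * u = a - a * v by rewrite {2}ea addrK.
    by apply: liB => //; apply: liM.
  rewrite ea scalerDl hK0 // add0r -scalerA; exact: smZ.
left => m hm; have [a [ha em]] := hQP m hm.
have hLa : L a by exists 0, a; rewrite add0r; split => //; [apply: li0 | split => //; rewrite -em].
by rewrite em; apply: hK0; apply: hdis => //; apply: hLK.
Qed.

Theorem lemma3p5 (R : nzRingType) (hR : right_almost_perfect R)
  (M : lmodType R) : non_faithful M -> semiartinian M.
Proof.
move=> [r0 [r0nz hr0]] N f fs [y0 hy0].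
pose I (r : R) := forall m : M, r *: m = 0.
have hI : two_sided_ideal I.
  split; first split.
  + by move=> m; rewrite scale0r.
  + by move=> x y hx hy m; rewrite scalerDl hx hy addr0.
  + by move=> r x hx m; rewrite -scalerA hx scaler0.
  + by move=> r x hx m; rewrite -scalerA hx.
have IN : forall r, I r -> forall n : N, r *: n = 0.
  by move=> r hr n; have [m <-] := fs n; rewrite -linearZ /= hr linear0.
case: (classic (I 1)) => [h1|h1].
  by exfalso; apply: hy0; rewrite -[y0]scale1r; apply: IN.
have [S [f1 hf1]] := quot_exists hI h1.
have hRS := hR I hI (ex_intro _ r0 (conj hr0 r0nz)) (ex_intro _ 1 h1) S f1 hf1.
case: hRS => hTn hss.
have [T [g hg]] := quot_exists (jac_two S) (jac_proper hTn).
have hssT := hss T g hg.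
pose K0 x := (g \o f1) x = 0.
have surj : forall t, exists x, (g \o f1) x = t.
  move=> t; have [s <-] := hg.1 t; have [x <-] := hf1.1 s; by exists x.
have hc : compl_prop K0 := compl_transfer surj hssT.
have K0J : forall x, K0 x -> jacobson (f1 x) by move=> x hx; apply/(hg.2 (f1 x)).
have [y [ny hy]] : exists y : N, y <> 0 /\ forall r, K0 r -> r *: y = 0.
  apply: (stepA hy0) => a ha.
  have [n hn] := hTn (fun n => f1 (a n)) (fun n => K0J _ (ha n)).
  exists n; apply: IN; apply/(hf1.2 _); by rewrite rev_prod_morph.
pose A (x : R) := x *: y = 0.
have hA : left_ideal A.
  split.
  + by rewrite /A scale0r.
  + by move=> u v hu hv; rewrite /A scalerDl hu hv addr0.
  + by move=> r u hu; rewrite /A -scalerA hu scaler0.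
have nA1 : ~ A 1 by rewrite /A scale1r.
have [K [hK hAK nK1 hmax]] := max_exists hc hA hy nA1.
exact: (simple_exists hc ny hy hK hAK nK1 hmax).
Qed.
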